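(* For every Stone space $X$ the Heisenberg group $H_X=(\mathbb{Z}_2\oplus V)\rtimes V^{*}$ is a minimal and non-archimedean topological group.
   Context: A Stone space is a compact zero-dimensional Hausdorff space. $\mathbb{Z}_2$ is the discrete two-element group. $V=C(X,\mathbb{Z}_2)$ is the Boolean group of continuous maps $X\to\mathbb{Z}_2$ (equivalently, clopen subsets of $X$ under symmetric difference) with the discrete topology. $V^*=\mathrm{Hom}(V,\mathbb{Z}_2)$ is the group of all homomorphisms $V\to\mathbb{Z}_2$ with the topology of pointwise convergence (a compact subgroup of $\mathbb{Z}_2^V$). $H_X$ is the set $\mathbb{Z}_2\times V\times V^*$ with the product topology and multiplication $(a_1,x_1,f_1)(a_2,x_2,f_2)=(a_1+a_2+f_1(x_2),\,x_1+x_2,\,f_1+f_2)$. A Hausdorff topological group is minimal if it admits no strictly coarser Hausdorff group topology. A topological group is non-archimedean if it has a local base at the identity consisting of open subgroups. *)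

(* Defs.v *)
From Stdlib Require Import List Bool Classical FunctionalExtensionality PropExtensionality.
Set Implicit Arguments.

Definition is_topology {T : Type} (O : (T -> Prop) -> Prop) : Prop :=
  O (fun _ => True) /\
  (forall U W, O U -> O W -> O (fun x => U x /\ W x)) /\
  (forall F : (T -> Prop) -> Prop,
      (forall U, F U -> O U) -> O (fun x => exists U, F U /\ U x)).

Definition continuous {A B : Type} (OA : (A -> Prop) -> Prop)
  (OB : (B -> Prop) -> Prop) (f : A -> B) : Prop :=
  forall U, OB U -> OA (fun x => U (f x)).

Definition hausdorff {T : Type} (O : (T -> Prop) -> Prop) : Prop :=
  forall x y : T, x <> y ->
    exists U W, O U /\ O W /\ U x /\ W y /\ (forall z, ~ (U z /\ W z)).

Definition compact {T : Type} (O : (T -> Prop) -> Prop) : Prop :=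
  forall F : (T -> Prop) -> Prop,
    (forall U, F U -> O U) ->
    (forall x, exists U, F U /\ U x) ->
    exists l : list (T -> Prop),
      (forall U, In U l -> F U) /\ (forall x, exists U, In U l /\ U x).

Definition clopen {T : Type} (O : (T -> Prop) -> Prop) (C : T -> Prop) : Prop :=
  O C /\ O (fun x => ~ C x).

Definition zero_dimensional {T : Type} (O : (T -> Prop) -> Prop) : Prop :=
  forall U x, O U -> U x -> exists C, clopen O C /\ C x /\ (forall y, C y -> U y).

Definition stone_space {T : Type} (O : (T -> Prop) -> Prop) : Prop :=
  is_topology O /\ compact O /\ zero_dimensional O /\ hausdorff O.

Definition discrete_top (T : Type) : (T -> Prop) -> Prop := fun _ => True.
Arguments discrete_top T _ : clear implicits.

Definition prod_top {A B : Type} (OA : (A -> Prop) -> Prop)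
  (OB : (B -> Prop) -> Prop) : ((A * B) -> Prop) -> Prop :=
  fun U => forall p, U p -> exists U1 U2, OA U1 /\ OB U2 /\ U1 (fst p) /\ U2 (snd p)
     /\ (forall a b, U1 a -> U2 b -> U (a, b)).

Definition pointwise_top {I Y : Type} (OY : (Y -> Prop) -> Prop)
  : ((I -> Y) -> Prop) -> Prop :=
  fun U => forall f, U f -> exists l : list (I * (Y -> Prop)),
    (forall iW, In iW l -> OY (snd iW) /\ snd iW (f (fst iW))) /\
    (forall g, (forall iW, In iW l -> snd iW (g (fst iW))) -> U g).

Definition sub_top {T : Type} {P : T -> Prop} (O : (T -> Prop) -> Prop)
  : ({x : T | P x} -> Prop) -> Prop :=
  fun U => exists W, O W /\ forall s, U s <-> W (proj1_sig s).

Definition is_group {G : Type} (mul : G -> G -> G) (inv : G -> G) (e : G) : Prop :=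
  (forall x y z, mul x (mul y z) = mul (mul x y) z) /\
  (forall x, mul e x = x) /\ (forall x, mul x e = x) /\
  (forall x, mul (inv x) x = e) /\ (forall x, mul x (inv x) = e).

Definition group_topology {G : Type} (mul : G -> G -> G) (inv : G -> G)
  (O : (G -> Prop) -> Prop) : Prop :=
  is_topology O /\
  continuous (prod_top O O) O (fun p => mul (fst p) (snd p)) /\
  continuous O O inv.

Definition hausdorff_group_topology {G : Type} (mul : G -> G -> G) (inv : G -> G)
  (O : (G -> Prop) -> Prop) : Prop :=
  group_topology mul inv O /\ hausdorff O.

Definition minimal_group_topology {G : Type} (mul : G -> G -> G) (inv : G -> G)
  (O : (G -> Prop) -> Prop) : Prop :=
  hausdorff_group_topology mul inv O /\
  forall O' : (G -> Prop) -> Prop,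
    hausdorff_group_topology mul inv O' ->
    (forall U, O' U -> O U) -> (forall U, O U -> O' U).

Definition is_subgroup {G : Type} (mul : G -> G -> G) (inv : G -> G) (e : G)
  (H : G -> Prop) : Prop :=
  H e /\ (forall x y, H x -> H y -> H (mul x y)) /\ (forall x, H x -> H (inv x)).

Definition non_archimedean {G : Type} (mul : G -> G -> G) (inv : G -> G) (e : G)
  (O : (G -> Prop) -> Prop) : Prop :=
  forall U, O U -> U e ->
    exists H, O H /\ is_subgroup mul inv e H /\ (forall x, H x -> U x).

Lemma top_ext {T : Type} (O : (T -> Prop) -> Prop) (U W : T -> Prop) :
  O U -> (forall x, U x <-> W x) -> O W.
Proof.
  intros HU HUW.
  replace W with U; [exact HU|].
  apply functional_extensionality; intro x; apply propositional_extensionality; auto.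
Qed.

Record StoneSpace : Type := {
  st_carrier :> Type;
  st_open : (st_carrier -> Prop) -> Prop;
  st_stone : stone_space st_open
}.

Lemma const_cont {X : Type} (OX : (X -> Prop) -> Prop) (b : bool) :
  is_topology OX -> continuous OX (discrete_top bool) (fun _ => b).
Proof.
  intros [Htop [_ Hun]] U _.
  destruct (classic (U b)) as [Hb|Hb].
  - apply (@top_ext _ OX _ _ Htop). intros; tauto.
  - specialize (Hun (fun _ => False) (fun _ H => match H with end)).
    apply (@top_ext _ OX _ _ Hun). intros x; split; [intros [W [[] _]] | tauto].
Qed.

Lemma xorb_cont {X : Type} (OX : (X -> Prop) -> Prop) (f g : X -> bool) :
  is_topology OX -> continuous OX (discrete_top bool) f ->
  continuous OX (discrete_top bool) g ->
  continuous OX (discrete_top bool) (fun x => xorb (f x) (g x)).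
Proof.
  intros Htop Hf Hg U _.
  destruct Htop as [Hfull [Hint Hun]].
  set (F := fun W : X -> Prop => exists b1 b2, U (xorb b1 b2) /\
              W = (fun x => f x = b1 /\ g x = b2)).
  assert (HF : forall W, F W -> OX W).
  { intros W [b1 [b2 [_ ->]]]. apply Hint.
    - exact (Hf (fun y => y = b1) I).
    - exact (Hg (fun y => y = b2) I). }
  apply (@top_ext _ OX _ _ (Hun F HF)). intros x; split.
  - intros [W [[b1 [b2 [Hb ->]]] [E1 E2]]]. rewrite E1, E2. exact Hb.
  - intros Hx. exists (fun y => f y = f x /\ g y = g x). split; [|split; reflexivity].
    exists (f x), (g x). split; [exact Hx | reflexivity].
Qed.

Section Heisenberg.
Variable X : StoneSpace.

Let Xtop : is_topology (st_open X) := proj1 (st_stone X).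

(* Z_2 is bool with xorb.  V = C(X, Z_2), continuous maps into discrete Z_2. *)
Definition Vsp : Type := {f : X -> bool | continuous (st_open X) (discrete_top bool) f}.

Definition Vzero : Vsp := exist _ (fun _ => false) (const_cont false Xtop).

Definition Vadd (u v : Vsp) : Vsp :=
  exist _ (fun x => xorb (proj1_sig u x) (proj1_sig v x))
    (xorb_cont Xtop (proj2_sig u) (proj2_sig v)).

Definition Vdual : Type :=
  {phi : Vsp -> bool | forall u v, phi (Vadd u v) = xorb (phi u) (phi v)}.

Lemma dual_zero_hom : forall u v : Vsp, false = xorb false false.
Proof. reflexivity. Qed.

Definition Vdzero : Vdual := exist _ (fun _ => false) dual_zero_hom.

Lemma dual_add_hom (p q : Vdual) : forall u v,
  xorb (proj1_sig p (Vadd u v)) (proj1_sig q (Vadd u v)) =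
  xorb (xorb (proj1_sig p u) (proj1_sig q u)) (xorb (proj1_sig p v) (proj1_sig q v)).
Proof.
  intros u v. rewrite (proj2_sig p), (proj2_sig q).
  destruct (proj1_sig p u), (proj1_sig q u), (proj1_sig p v), (proj1_sig q v); reflexivity.
Qed.

Definition Vdadd (p q : Vdual) : Vdual :=
  exist _ (fun u => xorb (proj1_sig p u) (proj1_sig q u)) (dual_add_hom p q).

Definition V_top : (Vsp -> Prop) -> Prop := discrete_top Vsp.
Definition Vdual_top : (Vdual -> Prop) -> Prop :=
  sub_top (pointwise_top (discrete_top bool)).

Definition HX : Type := bool * (Vsp * Vdual).

Definition HX_mul (p q : HX) : HX :=
  match p, q with
  | (a1, (x1, f1)), (a2, (x2, f2)) =>
      (xorb (xorb a1 a2) (proj1_sig f1 x2), (Vadd x1 x2, Vdadd f1 f2))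
  end.

Definition HX_inv (p : HX) : HX :=
  match p with (a, (x, f)) => (xorb a (proj1_sig f x), (x, f)) end.

Definition HX_one : HX := (false, (Vzero, Vdzero)).

Definition HX_top : (HX -> Prop) -> Prop :=
  prod_top (discrete_top bool) (prod_top V_top Vdual_top).

End Heisenberg.

(* Main.v *)
Require Import Defs.
From Stdlib Require Import List Bool Classical FunctionalExtensionality PropExtensionality ProofIrrelevance.
Import ListNotations.

Lemma Vsp_ext {X : StoneSpace} {u v : Vsp X} :
  (forall p, proj1_sig u p = proj1_sig v p) -> u = v.
Proof.
  destruct u as [u hu], v as [v hv]; simpl; intro H.
  assert (u = v) by (apply functional_extensionality; auto). subst.
  f_equal. apply proof_irrelevance.
Qed.

Lemma Vdual_ext {X : StoneSpace} {u v : Vdual X} :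
  (forall p, proj1_sig u p = proj1_sig v p) -> u = v.
Proof.
  destruct u as [u hu], v as [v hv]; simpl; intro H.
  assert (u = v) by (apply functional_extensionality; auto). subst.
  f_equal. apply proof_irrelevance.
Qed.

Lemma Vadd00 {X : StoneSpace} : Vadd (Vzero X) (Vzero X) = Vzero X.
Proof. apply Vsp_ext; reflexivity. Qed.

Lemma f_zero {X : StoneSpace} (f : Vdual X) : proj1_sig f (Vzero X) = false.
Proof.
  pose proof (proj2_sig f (Vzero X) (Vzero X)) as H. rewrite Vadd00 in H.
  destruct (proj1_sig f (Vzero X)); simpl in *; congruence.
Qed.

Lemma HX_eq {X : StoneSpace} (a1 a2 : bool) (x1 x2 : Vsp X) (f1 f2 : Vdual X) :
  a1 = a2 -> (forall p, proj1_sig x1 p = proj1_sig x2 p) ->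
  (forall v, proj1_sig f1 v = proj1_sig f2 v) -> ((a1, (x1, f1)) : HX X) = (a2, (x2, f2)).
Proof.
  intros -> Hx Hf. rewrite (Vsp_ext Hx), (Vdual_ext Hf). reflexivity.
Qed.

Ltac bdestr := repeat match goal with
  | |- context [proj1_sig ?f ?v] => destruct (proj1_sig f v)
  | |- context [match ?b with true => _ | false => _ end] => destruct b
  end; reflexivity.

Lemma HX_group {X : StoneSpace} :
  is_group (HX_mul (X:=X)) (HX_inv (X:=X)) (HX_one X).
Proof.
  unfold is_group. repeat split.
  - intros [a1 [x1 f1]] [a2 [x2 f2]] [a3 [x3 f3]]. simpl.
    apply HX_eq; simpl.
    + rewrite (proj2_sig f1). destruct a1, a2, a3; bdestr.
    + intros p. bdestr.
    + intros v. bdestr.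
  - intros [a [x f]]; simpl. apply HX_eq; simpl; try intros; try rewrite f_zero; try destruct a; bdestr.
  - intros [a [x f]]; simpl. apply HX_eq; simpl; try intros; try rewrite f_zero; try destruct a; bdestr.
  - intros [a [x f]]; simpl. apply HX_eq; simpl; try intros; try rewrite (proj2_sig f); try destruct a; bdestr.
  - intros [a [x f]]; simpl. apply HX_eq; simpl; try intros; try destruct a; bdestr.
Qed.

Definition basic {X : StoneSpace} (p : HX X) (L : list (Vsp X)) (q : HX X) : Prop :=
  fst q = fst p /\ fst (snd q) = fst (snd p) /\
  forall v, In v L -> proj1_sig (snd (snd q)) v = proj1_sig (snd (snd p)) v.

Lemma basic_refl {X : StoneSpace} (p : HX X) L : basic p L p.
Proof. repeat split; auto. Qed.

Lemma basic_open {X : StoneSpace} (p : HX X) L : HX_top (basic p L).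
Proof.
  unfold HX_top, prod_top. intros q Hq.
  exists (fun b => b = fst q),
    (fun r => fst r = fst (snd q) /\ forall v, In v L -> proj1_sig (snd r) v = proj1_sig (snd (snd q)) v).
  split; [exact I|]. split.
  - intros r Hr. exists (fun y => y = fst r),
      (fun s => forall v, In v L -> proj1_sig s v = proj1_sig (snd r) v).
    split; [exact I|]. split.
    + exists (fun g => forall v, In v L -> g v = proj1_sig (snd r) v). split.
      * intros g Hg. exists (map (fun v => (v, fun b => b = g v)) L). split.
        -- intros iW HiW. apply in_map_iff in HiW. destruct HiW as [v [<- _]].
           simpl. split; [exact I|reflexivity].
        -- intros g' Hg' v Hv. rewrite <- (Hg v Hv).
           apply (Hg' (v, fun b => b = g v)). apply in_map_iff. exists v; auto.
      * intros s; tauto.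
    + split; [reflexivity|]. split; [intros; reflexivity|].
      intros a b Ha Hb. simpl. destruct Hr as [Hr1 Hr2]. split; [rewrite Ha; exact Hr1|].
      intros v Hv. rewrite Hb by auto. auto.
  - destruct Hq as [Hq1 [Hq2 Hq3]].
    split; [reflexivity|]. split; [split; [reflexivity| intros; reflexivity]|].
    intros a b Ha [Hb1 Hb2]. unfold basic; simpl. split; [etransitivity; [exact Ha|exact Hq1]|]. split; [etransitivity; [exact Hb1|exact Hq2]|].
    intros v Hv. rewrite Hb2 by auto. auto.
Qed.

Lemma open_basic {X : StoneSpace} {W : HX X -> Prop} {p : HX X} :
  HX_top W -> W p -> exists L, forall q, basic p L q -> W q.
Proof.
  intros HW Hp.
  destruct (HW p Hp) as [U1 [U2 [_ [HU2 [HU1p [HU2p Hall]]]]]].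
  destruct (HU2 _ HU2p) as [U21 [U22 [_ [HU22 [H21 [H22 Hall2]]]]]].
  destruct HU22 as [W' [HW' HiffW']].
  apply HiffW' in H22. destruct (HW' _ H22) as [l [Hl1 Hl2]].
  exists (map fst l). intros [a [x f]] [E1 [E2 E3]]. simpl in *.
  apply Hall; [rewrite E1; exact HU1p|]. apply Hall2; [rewrite E2; exact H21|].
  apply HiffW'. apply Hl2. intros iW HiW.
  rewrite E3 by (apply in_map_iff; exists iW; auto). apply Hl1; auto.
Qed.

Lemma open_of_basic {X : StoneSpace} (W : HX X -> Prop) :
  (forall p, W p -> exists L, forall q, basic p L q -> W q) -> HX_top W.
Proof.
  intros H p Hp. destruct (H p Hp) as [L HL].
  destruct (basic_open p L p (basic_refl p L)) as [U1 [U2 [H1 [H2 [H3 [H4 H5]]]]]].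
  exists U1, U2. repeat split; auto.
Qed.

Lemma HX_is_top {X : StoneSpace} : is_topology (HX_top (X:=X)).
Proof.
  split; [|split].
  - apply open_of_basic. intros p _. exists nil. intros; exact I.
  - intros U W HU HW. apply open_of_basic. intros p [Hu Hw].
    destruct (open_basic HU Hu) as [L1 H1]. destruct (open_basic HW Hw) as [L2 H2].
    exists (L1 ++ L2). intros q [E1 [E2 E3]]. split.
    + apply H1. repeat split; auto. intros; apply E3, in_or_app; auto.
    + apply H2. repeat split; auto. intros; apply E3, in_or_app; auto.
  - intros F HF. apply open_of_basic. intros p [U [HFU Hu]].
    destruct (open_basic (HF U HFU) Hu) as [L HL]. exists L. intros q Hq. exists U; auto.
Qed.

Lemma HX_mul_cont {X : StoneSpace} :
  continuous (prod_top (HX_top (X:=X)) (HX_top (X:=X))) (HX_top (X:=X)) (fun p => HX_mul (fst p) (snd p)).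
Proof.
  intros W HW [p q] Hpq. simpl in Hpq.
  destruct (open_basic HW Hpq) as [L HL].
  exists (basic p (fst (snd q) :: L)), (basic q L).
  split; [apply basic_open|]. split; [apply basic_open|].
  split; [apply basic_refl|]. split; [apply basic_refl|].
  intros a b Ha Hb. apply HL.
  destruct p as [pa [px pf]], q as [qa [qx qf]], a as [aa [ax af]], b as [ba [bx bf]].
  destruct Ha as [Ha1 [Ha2 Ha3]], Hb as [Hb1 [Hb2 Hb3]]. simpl in *. subst.
  unfold basic; simpl. split; [|split].
  - rewrite Ha3 by (left; reflexivity). reflexivity.
  - reflexivity.
  - intros v Hv. rewrite Ha3, Hb3 by (auto; right; auto). reflexivity.
Qed.

Lemma HX_inv_cont {X : StoneSpace} :
  continuous (HX_top (X:=X)) (HX_top (X:=X)) (HX_inv (X:=X)).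
Proof.
  intros W HW. apply open_of_basic. intros p Hp.
  destruct (open_basic HW Hp) as [L HL].
  exists (fst (snd p) :: L). intros q Hq. apply HL.
  destruct p as [pa [px pf]], q as [qa [qx qf]].
  destruct Hq as [H1 [H2 H3]]. simpl in *. subst.
  unfold basic; simpl. split; [|split].
  - rewrite H3 by (left; reflexivity). reflexivity.
  - reflexivity.
  - intros v Hv. rewrite H3 by (right; auto). reflexivity.
Qed.

Lemma HX_haus {X : StoneSpace} : hausdorff (HX_top (X:=X)).
Proof.
  intros [a [x f]] [b [y g]] Hne.
  assert (exists L, forall z, ~ (basic (a, (x, f)) L z /\ basic (b, (y, g)) L z)) as [L HL].
  { destruct (classic (a = b)) as [Eab|Nab].
    2:{ exists nil. intros z [[E1 _] [E2 _]]. apply Nab. simpl in *. congruence. }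
    destruct (classic (x = y)) as [Exy|Nxy].
    2:{ exists nil. intros z [[_ [E1 _]] [_ [E2 _]]]. apply Nxy. simpl in *. congruence. }
    destruct (classic (exists v, proj1_sig f v <> proj1_sig g v)) as [[v Hv]|Nv].
    - exists [v]. intros z [[_ [_ E1]] [_ [_ E2]]]. apply Hv. simpl in *.
      rewrite <- E1, <- E2 by (left; reflexivity). reflexivity.
    - exfalso. apply Hne. subst. f_equal. f_equal. apply Vdual_ext. intros v.
      destruct (classic (proj1_sig f v = proj1_sig g v)); auto. exfalso; eauto. }
  exists (basic (a, (x, f)) L), (basic (b, (y, g)) L).
  repeat split; try apply basic_open; auto.
Qed.

Lemma HX_nonarch {X : StoneSpace} :
  non_archimedean (HX_mul (X:=X)) (HX_inv (X:=X)) (HX_one X) (HX_top (X:=X)).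
Proof.
  intros U HU He. destruct (open_basic HU He) as [L HL].
  exists (basic (HX_one X) L). split; [apply basic_open|]. split; [|exact HL].
  split; [apply basic_refl|]. split.
  - intros [a [x f]] [b [y g]] [Ha [Hx Hf]] [Hb [Hy Hg]]. simpl in *. subst.
    unfold basic; simpl. split; [|split].
    + rewrite f_zero. reflexivity.
    + apply Vadd00.
    + intros v Hv. rewrite Hf, Hg by auto. reflexivity.
  - intros [a [x f]] [Ha [Hx Hf]]. simpl in *. subst. unfold basic; simpl.
    rewrite f_zero. auto.
Qed.

Lemma locally_open {T : Type} (O : (T -> Prop) -> Prop) (S : T -> Prop) :
  is_topology O -> (forall x, S x -> exists U, O U /\ U x /\ forall y, U y -> S y) -> O S.
Proof.
  intros [_ [_ Hun]] H.
  specialize (Hun (fun U => O U /\ forall y, U y -> S y) (fun U HU => proj1 HU)).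
  apply (top_ext _ _ _ Hun). intros x; split.
  - intros [U [[_ HU] Ux]]; auto.
  - intros Sx. destruct (H x Sx) as [U [HU [Ux HUS]]]. exists U; auto.
Qed.

Lemma mul_loc {G : Type} {mul : G -> G -> G} {inv : G -> G} {O : (G -> Prop) -> Prop}
  {W : G -> Prop} {a b : G} :
  group_topology mul inv O -> O W -> W (mul a b) ->
  exists A B, O A /\ O B /\ A a /\ B b /\ forall x y, A x -> B y -> W (mul x y).
Proof.
  intros [_ [Hm _]] HW Hab.
  destruct (Hm W HW (a, b) Hab) as [U1 [U2 [H1 [H2 [H3 [H4 H5]]]]]].
  exists U1, U2. repeat split; auto.
Qed.

Definition comm {G : Type} (mul : G -> G -> G) (inv : G -> G) (u h : G) : G :=
  mul (mul (mul u h) (inv u)) (inv h).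

Lemma comm_loc {G : Type} {mul : G -> G -> G} {inv : G -> G} {O : (G -> Prop) -> Prop}
  {W : G -> Prop} {u0 h0 : G} :
  group_topology mul inv O -> O W -> W (comm mul inv u0 h0) ->
  exists A B, O A /\ O B /\ A u0 /\ B h0 /\
    forall u h, A u -> B h -> W (comm mul inv u h).
Proof.
  intros Hg HW H0. unfold comm in *.
  destruct (mul_loc Hg HW H0) as [A1 [B1 [HA1 [HB1 [A1x [B1y H1]]]]]].
  destruct (mul_loc Hg HA1 A1x) as [A2 [B2 [HA2 [HB2 [A2x [B2y H2]]]]]].
  destruct (mul_loc Hg HA2 A2x) as [A3 [B3 [HA3 [HB3 [A3x [B3y H3]]]]]].
  destruct Hg as [[_ [Hint _]] [_ Hinv]].
  exists (fun x => A3 x /\ B2 (inv x)), (fun x => B3 x /\ B1 (inv x)).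
  split; [apply Hint; [auto|apply Hinv; auto]|].
  split; [apply Hint; [auto|apply Hinv; auto]|].
  split; [auto|]. split; [auto|].
  intros u h [Hu1 Hu2] [Hh1 Hh2]. apply H1; auto.
Qed.

Lemma comm_formula {X : StoneSpace} a x f b y g :
  comm (HX_mul (X:=X)) (HX_inv (X:=X)) (a, (x, f)) (b, (y, g)) =
  (xorb (proj1_sig f y) (proj1_sig g x), (Vzero X, Vdzero X)).
Proof.
  unfold comm; simpl. apply HX_eq; simpl; try intros; try destruct a; try destruct b; bdestr.
Qed.

Definition delta {X : StoneSpace} (p : X) : Vdual X :=
  exist (fun phi : Vsp X -> bool => forall u v, phi (Vadd u v) = xorb (phi u) (phi v))
    (fun v : Vsp X => proj1_sig v p) (fun u v => eq_refl).

Definition hp {X : StoneSpace} (p : X) : HX X := (false, (Vzero X, delta p)).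
Definition hy {X : StoneSpace} (y : Vsp X) : HX X := (false, (y, Vdzero X)).

Lemma agree_open {X : StoneSpace} (L : list (Vsp X)) (q0 : X) :
  st_open X (fun q => forall v, In v L -> proj1_sig v q = proj1_sig v q0).
Proof.
  destruct (st_stone X) as [[Hfull [Hint _]] _].
  induction L as [|v L IH].
  - apply (top_ext _ _ _ Hfull). intros; simpl; split; [intros _ v []|auto].
  - pose proof (proj2_sig v (fun b => b = proj1_sig v q0) I) as Hv. simpl in Hv.
    apply (top_ext _ _ _ (Hint _ _ Hv IH)). intros q; split.
    + intros [H1 H2] w [<-|Hw]; auto.
    + intros H; split; [apply H; left; auto|intros; apply H; right; auto].
Qed.

Lemma hp_cont {X : StoneSpace} (B : HX X -> Prop) :
  HX_top B -> st_open X (fun q => B (hp q)).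
Proof.
  intros HB. apply locally_open; [exact (proj1 (st_stone X))|].
  intros q0 Hq0. destruct (open_basic HB Hq0) as [L HL].
  exists (fun q => forall v, In v L -> proj1_sig v q = proj1_sig v q0).
  split; [apply agree_open|]. split; [auto|].
  intros q Hq. apply HL. unfold basic, hp; simpl. split; [auto|split; auto].
Qed.

Lemma Xpart {X : StoneSpace} (O' : (HX X -> Prop) -> Prop) (U0 : HX X -> Prop) :
  group_topology (HX_mul (X:=X)) (HX_inv (X:=X)) O' ->
  (forall U, O' U -> HX_top U) -> O' U0 -> U0 (HX_one X) ->
  ~ U0 (true, (Vzero X, Vdzero X)) ->
  exists M, O' M /\ M (HX_one X) /\ forall a x f, M (a, (x, f)) -> forall p, proj1_sig x p = false.
Proof.
  intros Hg Hc HU0 He Hnc.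
  set (P := fun p A B => O' A /\ O' B /\ A (HX_one X) /\ B (hp p) /\
              forall u h, A u -> B h -> U0 (comm (HX_mul (X:=X)) (HX_inv (X:=X)) u h)).
  assert (Hp : forall p, exists A B, P p A B).
  { intro p. unfold P. apply comm_loc; auto. unfold HX_one, hp. rewrite comm_formula.
    simpl. exact He. }
  set (F := fun W : X -> Prop => exists p A B, P p A B /\ W = (fun q => B (hp q))).
  destruct (st_stone X) as [_ [Hcomp _]].
  destruct (Hcomp F) as [l [Hl1 Hl2]].
  - intros W [p [A [B [HP ->]]]]. apply hp_cont. apply Hc. apply HP.
  - intros x. destruct (Hp x) as [A [B HP]]. exists (fun q => B (hp q)).
    split; [exists x, A, B; auto | apply HP].
  - assert (Hind : exists M, O' M /\ M (HX_one X) /\ forall W, In W l ->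
        exists p A B, P p A B /\ W = (fun q => B (hp q)) /\ forall u, M u -> A u).
    { clear Hl2. induction l as [|W l IH].
      - exists (fun _ => True). split; [exact (proj1 (proj1 Hg))|]. split; [exact I| intros _ []].
      - destruct IH as [M [HM [HMe HMl]]]; [intros; apply Hl1; right; auto|].
        destruct (Hl1 W (or_introl eq_refl)) as [p [A [B [HP EW]]]].
        exists (fun u => A u /\ M u).
        split; [apply (proj1 (proj2 (proj1 Hg))); [apply HP|auto]|].
        split; [split; [apply HP|auto]|].
        intros W' [<-|HW'].
        + exists p, A, B. split; auto. split; auto. intros u [? ?]; auto.
        + destruct (HMl W' HW') as [p' [A' [B' [H1 [H2 H3]]]]].
          exists p', A', B'. split; auto. split; auto. intros u [? ?]; auto. }
    destruct Hind as [M [HM [HMe HMl]]]. exists M. split; auto. split; auto.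
    intros a x f Hu p. destruct (proj1_sig x p) eqn:Exp; [|reflexivity]. exfalso.
    destruct (Hl2 p) as [W [HWl HWp]].
    destruct (HMl W HWl) as [p' [A [B [HP [EW HMA]]]]]. subst W.
    apply Hnc. destruct HP as [_ [_ [_ [_ HP]]]].
    specialize (HP _ _ (HMA _ Hu) HWp). unfold hp in HP. rewrite comm_formula in HP.
    simpl in HP. rewrite f_zero, Exp in HP. exact HP.
Qed.

Lemma Fpart {X : StoneSpace} (O' : (HX X -> Prop) -> Prop) (U0 : HX X -> Prop) (G : list (Vsp X)) :
  group_topology (HX_mul (X:=X)) (HX_inv (X:=X)) O' ->
  O' U0 -> U0 (HX_one X) ->
  ~ U0 (true, (Vzero X, Vdzero X)) ->
  exists M, O' M /\ M (HX_one X) /\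
    forall a x f, M (a, (x, f)) -> forall y, In y G -> proj1_sig f y = false.
Proof.
  intros Hg HU0 He Hnc. induction G as [|y G IH].
  - exists (fun _ => True). split; [exact (proj1 (proj1 Hg))|]. split; [exact I| intros _ _ _ _ _ []].
  - destruct IH as [M [HM [HMe HMl]]].
    assert (H0 : U0 (comm (HX_mul (X:=X)) (HX_inv (X:=X)) (HX_one X) (hy y))).
    { unfold HX_one, hy. rewrite comm_formula. simpl. exact He. }
    destruct (comm_loc Hg HU0 H0) as [A [B [HA [HB [HAe [HBy HAB]]]]]].
    exists (fun u => A u /\ M u).
    split; [apply (proj1 (proj2 (proj1 Hg))); auto|]. split; [auto|].
    intros a x f [HAu HMu] y' [<-|Hy'].
    + destruct (proj1_sig f y) eqn:E; [|reflexivity]. exfalso. apply Hnc.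
      specialize (HAB _ _ HAu HBy). unfold hy in HAB. rewrite comm_formula in HAB.
      simpl in HAB. rewrite E in HAB. exact HAB.
    + eapply HMl; eauto.
Qed.

Lemma basic_translate {X : StoneSpace} (z d : HX X) L :
  basic (HX_one X) L d -> basic z L (HX_mul z d).
Proof.
  destruct z as [a [x f]], d as [b [y g]]. intros [H1 [H2 H3]]. simpl in *. subst.
  unfold basic; simpl. split; [|split].
  - rewrite f_zero. destruct a; reflexivity.
  - apply Vsp_ext. intros p; simpl. destruct (proj1_sig x p); reflexivity.
  - intros v Hv. rewrite H3 by auto. simpl. destruct (proj1_sig f v); reflexivity.
Qed.

Lemma key {X : StoneSpace} (O' : (HX X -> Prop) -> Prop) (L : list (Vsp X)) :
  hausdorff_group_topology (HX_mul (X:=X)) (HX_inv (X:=X)) O' ->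
  (forall U, O' U -> HX_top U) ->
  exists M, O' M /\ M (HX_one X) /\ forall q, M q -> basic (HX_one X) L q.
Proof.
  intros [Hg Hh] Hc.
  destruct (Hh (HX_one X) (true, (Vzero X, Vdzero X))) as [U0 [W0 [HU0 [HW0 [He [Hcw Hdisj]]]]]].
  { unfold HX_one. congruence. }
  assert (Hnc : ~ U0 (true, (Vzero X, Vdzero X))) by (intro; apply (Hdisj (true, (Vzero X, Vdzero X))); auto).
  pose proof (HX_group (X:=X)) as [_ [Hl1 _]].
  assert (Hee : U0 (HX_mul (HX_one X) (HX_one X))) by (rewrite Hl1; exact He).
  destruct (mul_loc Hg HU0 Hee) as [A [B [HA [HB [HAe [HBe HAB]]]]]].
  set (M1 := fun u => A u /\ B u).
  assert (HM1 : O' M1) by (apply (proj1 (proj2 (proj1 Hg))); auto).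
  destruct (open_basic (Hc _ HM1) (conj HAe HBe)) as [L1 HL1].
  destruct (Xpart O' U0 Hg Hc HU0 He Hnc) as [M2 [HM2 [HM2e HM2x]]].
  destruct (Fpart O' U0 (L ++ L1) Hg HU0 He Hnc) as [M3 [HM3 [HM3e HM3f]]].
  exists (fun u => M1 u /\ M2 u /\ M3 u). split.
  { apply (proj1 (proj2 (proj1 Hg))); auto. apply (proj1 (proj2 (proj1 Hg))); auto. }
  split; [split; [split; auto|auto]|].
  intros [a [x f]] [HM1u [HM2u HM3u]].
  assert (Ex : x = Vzero X) by (apply Vsp_ext; intros p; apply (HM2x _ _ _ HM2u)). subst x.
  assert (Hf : forall v, In v (L ++ L1) -> proj1_sig f v = false) by (apply (HM3f _ _ _ HM3u)).
  assert (HM1f : M1 (false, (Vzero X, f))).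
  { apply HL1. unfold basic; simpl. split; [auto|split; auto].
    intros v Hv; apply Hf, in_or_app; auto. }
  destruct a.
  - exfalso. apply Hnc. destruct HM1u as [HAu _]. destruct HM1f as [_ HBf].
    specialize (HAB _ _ HAu HBf). simpl in HAB. rewrite f_zero in HAB.
    replace (true, (Vzero X, Vdzero X)) with
      ((true, (Vadd (Vzero X) (Vzero X), Vdadd f f)) : HX X); [exact HAB|].
    apply HX_eq; auto. intros v; simpl. destruct (proj1_sig f v); reflexivity.
  - unfold basic; simpl. split; [auto|split; auto]. intros v Hv; apply Hf, in_or_app; auto.
Qed.

Lemma coarsest {X : StoneSpace} (O' : (HX X -> Prop) -> Prop) :
  hausdorff_group_topology (HX_mul (X:=X)) (HX_inv (X:=X)) O' ->
  (forall U, O' U -> HX_top U) -> forall U, HX_top U -> O' U.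
Proof.
  intros Hhg Hc U HU. pose proof Hhg as [Hg _].
  pose proof (HX_group (X:=X)) as [Hassoc [Hl1 [Hr1 [Hli Hri]]]].
  apply locally_open; [exact (proj1 Hg)|].
  intros z Hz. destruct (open_basic HU Hz) as [L HL].
  destruct (key O' L Hhg Hc) as [M [HM [HMe HMb]]].
  exists (fun w => M (HX_mul (HX_inv z) w)). split; [|split].
  - apply locally_open; [exact (proj1 Hg)|]. intros w Hw.
    destruct (mul_loc Hg HM Hw) as [A [B [HA [HB [HAz [HBw HAB]]]]]].
    exists B. split; [auto|]. split; [auto|]. intros y Hy. apply HAB; auto.
  - simpl. rewrite Hli. exact HMe.
  - intros w Hw. apply HL.
    replace w with (HX_mul z (HX_mul (HX_inv z) w)).
    + apply basic_translate. apply HMb. exact Hw.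
    + rewrite Hassoc, Hri, Hl1. reflexivity.
Qed.

Theorem theorem4p1 (X : StoneSpace) :
  is_group (HX_mul (X:=X)) (HX_inv (X:=X)) (HX_one X) /\
  minimal_group_topology (HX_mul (X:=X)) (HX_inv (X:=X)) (HX_top (X:=X)) /\
  non_archimedean (HX_mul (X:=X)) (HX_inv (X:=X)) (HX_one X) (HX_top (X:=X)).
Proof.
  split; [apply HX_group|]. split; [|apply HX_nonarch].
  split.
  - split; [|apply HX_haus]. split; [apply HX_is_top|]. split; [apply HX_mul_cont|apply HX_inv_cont].
  - intros O' H1 H2. apply coarsest; auto.
Qed.
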